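(* Let $k$ be a field and $\mathcal{T}$ a Krull–Schmidt, Hom-finite, $k$-linear triangulated category with Serre functor $\mathbb{S}$. Let $\mathcal{A}$ be a $k$-linear abelian (full) subcategory of $\mathcal{T}$. Let $X,P\in\mathcal{A}$ with $P$ projective in $\mathcal{A}$. Then there is a strong $\mathcal{A}$-cover in $\mathcal{T}$ of the form $X\to\mathbb{S}P$ if and only if there is a natural isomorphism $D\mathcal{A}(P,-)\cong\mathcal{A}(-,X)$ of functors $\mathcal{A}^{\mathrm{op}}\to\operatorname{mod}_k$. Dually, let $Y,I\in\mathcal{A}$ with $I$ injective in $\mathcal{A}$; then there is a strong $\mathcal{A}$-envelope in $\mathcal{T}$ of the form $\mathbb{S}^{-1}I\to Y$ if and only if there is a natural isomorphism $D\mathcal{A}(-,I)\cong\mathcal{A}(Y,-)$ of functors $\mathcal{A}\to\operatorname{mod}_k$.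
   Context: $D=\operatorname{Hom}_k(-,k)$; $\operatorname{mod}_k$ is the category of finite dimensional $k$-vector spaces. A Serre functor is a $k$-linear autoequivalence $\mathbb{S}$ with isomorphisms $\mathcal{T}(X,Y)\cong D\mathcal{T}(Y,\mathbb{S}X)$ natural in $X,Y$. Subcategories are full and closed under isomorphisms. For $T\in\mathcal{T}$, a morphism $y\colon Y\to T$ with $Y\in\mathcal{A}$ is a strong $\mathcal{A}$-cover if $\mathcal{T}(Y',y)\colon\mathcal{T}(Y',Y)\to\mathcal{T}(Y',T)$ is bijective for all $Y'\in\mathcal{A}$; a morphism $y\colon T\to Y$ with $Y\in\mathcal{A}$ is a strong $\mathcal{A}$-envelope if $\mathcal{T}(y,Y')$ is bijective for all $Y'\in\mathcal{A}$. *)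

(* Defs.v *)
(* mor-spaces of a Hom-finite k-linear category are
   finite-dimensional k-vector spaces (vectType k); D = 'Hom(-, k^o). *)
From HB Require Import structures.
From mathcomp Require Import all_boot all_order all_algebra.
Set Implicit Arguments. Unset Strict Implicit. Unset Printing Implicit Defensive.
Import GRing.Theory.
Local Open Scope ring_scope.

Record kcat (k : fieldType) := KCat {
  ob :> Type;
  mor : ob -> ob -> vectType k;
  idm : forall X, mor X X;
  comp : forall X Y Z, mor Y Z -> mor X Y -> mor X Z;
  compA : forall X Y Z W (h : mor Z W) (g : mor Y Z) (f : mor X Y),
      comp h (comp g f) = comp (comp h g) f;
  comp1m : forall X Y (f : mor X Y), comp (idm Y) f = f;
  compm1 : forall X Y (f : mor X Y), comp f (idm X) = f;
  comp_linl : forall X Y Z (a : k) (g g' : mor Y Z) (f : mor X Y),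
      comp (a *: g + g') f = a *: comp g f + comp g' f;
  comp_linr : forall X Y Z (a : k) (g : mor Y Z) (f f' : mor X Y),
      comp g (a *: f + f') = a *: comp g f + comp g f'
}.
Arguments mor {k} _ _ _.
Arguments idm {k _} _.
Arguments comp {k _ _ _ _}.

Section Cat.
Variables (k : fieldType) (C : kcat k).

Definition is_iso (X Y : C) (f : mor C X Y) : Prop :=
  exists g : mor C Y X, comp g f = idm X /\ comp f g = idm Y.

Definition isomorphic (X Y : C) : Prop := exists f : mor C X Y, is_iso f.

Definition zero_obj (Z : C) : Prop :=
  (forall X (f g : mor C Z X), f = g) /\ (forall X (f g : mor C X Z), f = g).

Definition biproduct (X1 X2 B : C) (i1 : mor C X1 B) (i2 : mor C X2 B)
  (p1 : mor C B X1) (p2 : mor C B X2) : Prop :=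
  [/\ comp p1 i1 = idm X1, comp p2 i2 = idm X2, comp p1 i2 = 0,
      comp p2 i1 = 0 & comp i1 p1 + comp i2 p2 = idm B].

Definition fin_biproduct (n : nat) (Xs : 'I_n -> C) (X : C)
  (iota : forall i, mor C (Xs i) X) (pi : forall i, mor C X (Xs i)) : Prop :=
  [/\ forall i, comp (pi i) (iota i) = idm (Xs i),
      forall i j, i != j -> comp (pi i) (iota j) = 0
    & \sum_(i < n) comp (iota i) (pi i) = idm X].

Definition additive : Prop :=
  (exists Z, zero_obj Z) /\
  (forall X1 X2 : C, exists B i1 i2 p1 p2, @biproduct X1 X2 B i1 i2 p1 p2).

Definition local_end (Y : C) : Prop :=
  idm Y <> 0 /\ forall f : mor C Y Y, is_iso f \/ is_iso (idm Y - f).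

Definition krull_schmidt : Prop :=
  additive /\
  forall X : C, exists n (Xs : 'I_n -> C) iota pi,
    @fin_biproduct n Xs X iota pi /\ forall i, local_end (Xs i).

Record endofunctor := EndoF {
  fobj :> C -> C;
  fmap : forall X Y, mor C X Y -> mor C (fobj X) (fobj Y)
}.

Definition k_autoequiv (F : endofunctor) : Prop :=
  [/\ forall X, fmap F (idm X) = idm (F X),
      forall X Y Z (g : mor C Y Z) (f : mor C X Y),
        fmap F (comp g f) = comp (fmap F g) (fmap F f),
      forall X Y (a : k) (f f' : mor C X Y),
        fmap F (a *: f + f') = a *: fmap F f + fmap F f',
      forall X Y, bijective (@fmap F X Y)
    & forall Y, exists X, isomorphic (F X) Y].

Definition triangle_pred (Sh : endofunctor) :=
  forall X Y Z : C, mor C X Y -> mor C Y Z -> mor C Z (Sh X) -> Prop.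

Definition triangulated (Sh : endofunctor) (Dt : triangle_pred Sh) : Prop :=
  [/\ additive /\ k_autoequiv Sh,
   (forall X Y Z f g h X' Y' Z' f' g' h' (u : mor C X X') (v : mor C Y Y')
        (w : mor C Z Z'),
      @Dt X Y Z f g h -> is_iso u -> is_iso v -> is_iso w ->
      comp v f = comp f' u -> comp w g = comp g' v ->
      comp (fmap Sh u) h = comp h' w -> @Dt X' Y' Z' f' g' h') /\
   (forall X Z, zero_obj Z -> forall (g : mor C X Z) (h : mor C Z (Sh X)),
      @Dt X X Z (idm X) g h) /\
   (forall X Y (f : mor C X Y), exists Z g h, @Dt X Y Z f g h),
   (forall X Y Z f g h, @Dt X Y Z f g h <-> @Dt Y Z (Sh X) g h (- fmap Sh f)),
   (forall X Y Z f g h X' Y' Z' f' g' h' (u : mor C X X') (v : mor C Y Y'),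
      @Dt X Y Z f g h -> @Dt X' Y' Z' f' g' h' -> comp v f = comp f' u ->
      exists w : mor C Z Z', comp w g = comp g' v /\
                             comp (fmap Sh u) h = comp h' w)
 &
   (forall X Y Z (f : mor C X Y) (g : mor C Y Z)
      Q1 (p1 : mor C Y Q1) (d1 : mor C Q1 (Sh X))
      Q2 (p2 : mor C Z Q2) (d2 : mor C Q2 (Sh X))
      Q3 (p3 : mor C Z Q3) (d3 : mor C Q3 (Sh Y)),
      @Dt X Y Q1 f p1 d1 -> @Dt X Z Q2 (comp g f) p2 d2 -> @Dt Y Z Q3 g p3 d3 ->
      exists (a : mor C Q1 Q2) (b : mor C Q2 Q3),
        [/\ @Dt Q1 Q2 Q3 a b (comp (fmap Sh p1) d3), comp a p1 = comp p2 g,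
            comp d2 a = d1, comp b p2 = p3 & comp d3 b = comp (fmap Sh f) d2])].

Definition serre_functor (S : endofunctor)
  (sigma : forall X Y : C, mor C X Y -> 'Hom(mor C Y (S X), k^o)) : Prop :=
  [/\ k_autoequiv S,
      forall X Y (a : k) (f f' : mor C X Y),
        sigma X Y (a *: f + f') = a *: sigma X Y f + sigma X Y f',
      forall X Y, bijective (sigma X Y),
      forall X X' Y (a : mor C X' X) (f : mor C X Y) (u : mor C Y (S X')),
        sigma X' Y (comp f a) u = sigma X Y f (comp (fmap S a) u)
    & forall X Y Y' (b : mor C Y Y') (f : mor C X Y) (u : mor C Y' (S X)),
        sigma X Y' (comp b f) u = sigma X Y f (comp u b)].

Definition subcat (A : C -> Prop) : Prop :=
  forall X Y, isomorphic X Y -> A X -> A Y.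

Definition mono_in (A : C -> Prop) X Y (f : mor C X Y) : Prop :=
  forall W, A W -> forall g h : mor C W X, comp f g = comp f h -> g = h.
Definition epi_in (A : C -> Prop) X Y (f : mor C X Y) : Prop :=
  forall W, A W -> forall g h : mor C Y W, comp g f = comp h f -> g = h.

Definition kernel_in (A : C -> Prop) X Y (f : mor C X Y) K (kap : mor C K X)
  : Prop :=
  A K /\ comp f kap = 0 /\
  forall W, A W -> forall w : mor C W X, comp f w = 0 ->
    exists! t : mor C W K, comp kap t = w.
Definition cokernel_in (A : C -> Prop) X Y (f : mor C X Y) Q (c : mor C Y Q)
  : Prop :=
  A Q /\ comp c f = 0 /\
  forall W, A W -> forall w : mor C Y W, comp w f = 0 ->
    exists! t : mor C Q W, comp t c = w.

Definition abelian_subcat (A : C -> Prop) : Prop :=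
  [/\ subcat A,
      exists Z, A Z /\ zero_obj Z,
      forall X1 X2, A X1 -> A X2 ->
        exists B i1 i2 p1 p2, A B /\ @biproduct X1 X2 B i1 i2 p1 p2,
      forall X Y (f : mor C X Y), A X -> A Y ->
        (exists K kap, @kernel_in A X Y f K kap) /\
        (exists Q c, @cokernel_in A X Y f Q c)
    & forall X Y (f : mor C X Y), A X -> A Y ->
        (mono_in A f -> exists Q (g : mor C Y Q), A Q /\ kernel_in A g f) /\
        (epi_in A f -> exists K (g : mor C K X), A K /\ cokernel_in A g f)].

Definition projective_in (A : C -> Prop) (P : C) : Prop :=
  forall B D (e : mor C B D) (f : mor C P D), A B -> A D -> epi_in A e ->
    exists g : mor C P B, comp e g = f.
Definition injective_in (A : C -> Prop) (I : C) : Prop :=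
  forall B D (m : mor C B D) (f : mor C B I), A B -> A D -> mono_in A m ->
    exists g : mor C D I, comp g m = f.

Definition strong_cover (A : C -> Prop) (Y T : C) (y : mor C Y T) : Prop :=
  A Y /\ forall Y', A Y' -> bijective (fun u : mor C Y' Y => comp y u).
Definition strong_envelope (A : C -> Prop) (T Y : C) (y : mor C T Y) : Prop :=
  A Y /\ forall Y', A Y' -> bijective (fun u : mor C Y Y' => comp u y).

Definition nat_iso_DHomP (A : C -> Prop) (P X : C)
  (theta : forall Z : C, mor C Z X -> 'Hom(mor C P Z, k^o)) : Prop :=
  [/\ forall Z, A Z -> forall (a : k) (h h' : mor C Z X),
        theta Z (a *: h + h') = a *: theta Z h + theta Z h',
      forall Z, A Z -> bijective (theta Z)
    & forall Z Z', A Z -> A Z' -> forall (g : mor C Z Z') (h : mor C Z' X)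
        (u : mor C P Z), theta Z (comp h g) u = theta Z' h (comp g u)].

Definition nat_iso_DHomI (A : C -> Prop) (I Y : C)
  (theta : forall Z : C, mor C Y Z -> 'Hom(mor C Z I, k^o)) : Prop :=
  [/\ forall Z, A Z -> forall (a : k) (h h' : mor C Y Z),
        theta Z (a *: h + h') = a *: theta Z h + theta Z h',
      forall Z, A Z -> bijective (theta Z)
    & forall Z Z', A Z -> A Z' -> forall (g : mor C Z Z') (h : mor C Y Z)
        (v : mor C Z' I), theta Z' (comp g h) v = theta Z h (comp v g)].

End Cat.

(* Main.v *)
Require Import Defs.
From HB Require Import structures.
From mathcomp Require Import all_boot all_order all_algebra.
Import GRing.Theory.
Local Open Scope ring_scope.
Set Implicit Arguments. Unset Strict Implicit.

Section L.
Variables (K : fieldType) (U V : vectType K) (f : U -> V) (hf : linear f).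
Definition mkLin : {linear U -> V} :=
  HB.pack_for {linear U -> V} f (GRing.isLinear.Build K U V *:%R f hf).
Definition linf : 'Hom(U,V) := linfun mkLin.
Lemma linfE x : linf x = f x. Proof. by rewrite /linf lfunE. Qed.
End L.
Arguments linf {K U V f} hf.
Arguments linfE {K U V f} hf x.

Lemma inv_linear (K : fieldType) (U V : vectType K) (f : U -> V) (g : V -> U) :
  linear f -> cancel f g -> cancel g f -> linear g.
Proof.
move=> hf fg gf a x y.
by rewrite -{1}[x]gf -{1}[y]gf -hf fg.
Qed.

Lemma precomp_bij (K : fieldType) (U V W : vectType K) (f : U -> V) (g : V -> U)
  (hf : linear f) (hg : linear g) :
  cancel f g -> cancel g f ->
  bijective (fun Phi : 'Hom(V, W) => (Phi \o linf hf)%VF).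
Proof.
move=> fg gf; exists (fun Psi : 'Hom(U, W) => (Psi \o linf hg)%VF) => Phi;
  apply/lfunP => x; by rewrite !comp_lfunE !linfE ?gf ?fg.
Qed.

Arguments precomp_bij {K U V W f g}.

Lemma bij_of_eq (T1 T2 T3 : Type) (F : T2 -> T3) (G : T1 -> T3) (h : T1 -> T2) :
  bijective F -> bijective G -> (forall x, F (h x) = G x) -> bijective h.
Proof.
move=> [Fi F1 F2] hG e.
apply: (@eq_bij _ _ (Fi \o G)) => [|x /=]; last by rewrite -e F1.
apply: bij_comp => //; by exists F.
Qed.

Lemma bij3 (T1 T2 T3 T4 : Type) (a : T3 -> T4) (b : T2 -> T3) (c : T1 -> T2) :
  bijective a -> bijective b -> bijective c -> bijective (fun x => a (b (c x))).
Proof. move=> ha hb hc; exact: (bij_comp ha (bij_comp hb hc)). Qed.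

Theorem lemma2p5 (k : fieldType) (C : kcat k)
  (Sh : endofunctor C) (Dt : triangle_pred Sh) (hT : triangulated Dt)
  (hKS : krull_schmidt C)
  (S : endofunctor C)
  (sigma : forall X Y : C, mor C X Y -> 'Hom(mor C Y (S X), k^o))
  (hS : serre_functor sigma)
  (A : C -> Prop) (hA : abelian_subcat A) :
  (forall X P : C, A X -> A P -> projective_in A P ->
     ((exists y : mor C X (S P), strong_cover A y) <->
      (exists theta, @nat_iso_DHomP k C A P X theta))) /\
  (forall Y I : C, A Y -> A I -> injective_in A I ->
     ((exists (T : C) (y : mor C T Y), isomorphic (S T) I /\ strong_envelope A y) <->
      (exists theta, @nat_iso_DHomI k C A I Y theta))).
Proof.
case: hS => [[Sid Scomp Slin Sbij Sdense] hsl hsb hnat1 hnat2].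
have SL : forall X Y, linear (@fmap _ _ S X Y) by move=> X Y a u v; exact: Slin.
have postL : forall (W V Z : C) (g : mor C W V), linear (fun v : mor C Z W => Defs.comp g v).
  by move=> W V Z g a u v; rewrite comp_linr.
split.
- move=> X P AX AP _; split.
  + case=> y [_ hy].
    exists (fun Z h => (sigma Z (S P) (Defs.comp y h) \o linf (SL P Z))%VF); split.
    * move=> Z AZ a h h'; apply/lfunP => u.
      by rewrite !comp_lfunE add_lfunE scale_lfunE !comp_lfunE comp_linr hsl
        add_lfunE scale_lfunE.
    * move=> Z AZ; case: (Sbij P Z) => Si c1 c2.
      have HB := bij3 (a := fun Phi : 'Hom(mor C (S P) (S Z), k^o) => (Phi \o linf (SL P Z))%VF)
        (b := sigma Z (S P)) (c := fun h => Defs.comp y h) (precomp_bij (SL P Z) (inv_linear (SL P Z) c1 c2) c1 c2) (hsb _ _) (hy Z AZ).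
      exact: HB.
    * move=> Z Z' AZ AZ' g h u.
      by rewrite !comp_lfunE !linfE Defs.compA hnat1 Scomp.
  + case=> theta [tl tb tn].
    have SiX := Sbij P X; case: SiX => SiX cX1 cX2.
    have SiLX := inv_linear (SL P X) cX1 cX2.
    case: (hsb X (S P)) => si s1 s2.
    pose psi := (theta X (idm X) \o linf SiLX)%VF.
    exists (si psi); split => // Z AZ.
    case: (Sbij P Z) => SiZ cZ1 cZ2.
    have SiLZ := inv_linear (SL P Z) cZ1 cZ2.
    apply: (bij_of_eq (F := sigma Z (S P)) (G := fun h => (theta Z h \o linf SiLZ)%VF)).
    * exact: hsb.
    * have HB := bij_comp (f := fun Phi : 'Hom(mor C P Z, k^o) => (Phi \o linf SiLZ)%VF)
        (h := theta Z) (precomp_bij SiLZ (SL P Z) cZ2 cZ1) (tb Z AZ).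
      exact: HB.
    * move=> h; apply/lfunP => w.
      rewrite comp_lfunE linfE hnat1 s2 /psi comp_lfunE linfE.
      rewrite -[h in theta Z h](comp1m h) tn //.
      congr (theta X (idm X) _).
      by rewrite -{1}[w]cZ2 -Scomp cX1.
- move=> Y I AY AI _; split.
  + case=> T [y [[f [g [gf fg]]] [_ hy]]].
    exists (fun Z h => (sigma T Z (Defs.comp h y) \o linf (postL I (S T) Z g))%VF); split.
    * move=> Z AZ a h h'; apply/lfunP => u.
      by rewrite !comp_lfunE add_lfunE scale_lfunE !comp_lfunE comp_linl hsl
        add_lfunE scale_lfunE.
    * move=> Z AZ.
      have c1 : cancel (fun v : mor C Z I => Defs.comp g v) (fun v => Defs.comp f v).
        by move=> v; rewrite Defs.compA fg comp1m.
      have c2 : cancel (fun v : mor C Z (S T) => Defs.comp f v) (fun v => Defs.comp g v).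
        by move=> v; rewrite Defs.compA gf comp1m.
      have HB := bij3 (a := fun Phi : 'Hom((mor C Z (S T)), k^o) => (Phi \o linf (postL I (S T) Z g))%VF)
        (b := sigma T Z) (c := fun h => Defs.comp h y) (precomp_bij (postL I (S T) Z g) (postL (S T) I Z f) c1 c2) (hsb _ _) (hy Z AZ).
      exact: HB.
    * move=> Z Z' AZ AZ' g' h v.
      by rewrite !comp_lfunE !linfE -Defs.compA hnat2 Defs.compA.
  + case=> theta [tl tb tn].
    case: (Sdense I) => T [f [g [gf fg]]].
    case: (hsb T Y) => si s1 s2.
    pose psi := (theta Y (idm Y) \o linf (postL (S T) I Y f))%VF.
    exists T, (si psi); split; first by exists f, g.
    split => // Z AZ.
    have c1 : cancel (fun v : mor C Z (S T) => Defs.comp f v) (fun v => Defs.comp g v).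
      by move=> v; rewrite Defs.compA gf comp1m.
    have c2 : cancel (fun v : mor C Z I => Defs.comp g v) (fun v => Defs.comp f v).
      by move=> v; rewrite Defs.compA fg comp1m.
    apply: (bij_of_eq (F := sigma T Z)
              (G := fun h => (theta Z h \o linf (postL (S T) I Z f))%VF)).
    * exact: hsb.
    * have HB := bij_comp (f := fun Phi : 'Hom(mor C Z I, k^o) => (Phi \o linf (postL (S T) I Z f))%VF)
        (h := theta Z) (precomp_bij (postL (S T) I Z f) (postL I (S T) Z g) c1 c2) (tb Z AZ).
      exact: HB.
    * move=> h; apply/lfunP => w.
      rewrite comp_lfunE linfE hnat2 s2 /psi comp_lfunE linfE.
      rewrite -[h in theta Z h](compm1 h) tn // Defs.compA //.
Qed.
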